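(* For all integers $m,n\ge0$ and $p\ge0$, $$\sum_{k=0}^{m}s(m,k)\,\mathcal{B}_{n+k,p}=\sum_{k=0}^{n}S_m(n+m,k+m)\binom{m+k+p}{p}^{-1}.$$
   Context: $s(m,k)$ are the signed Stirling numbers of the first kind, defined by $x(x-1)\cdots(x-m+1)=\sum_{k=0}^m s(m,k)x^k$. $S_r(n,k)$ denotes the $r$-Stirling numbers of the second kind (number of partitions of an $n$-set into $k$ nonempty blocks such that the first $r$ elements lie in distinct blocks); they satisfy $\sum_{n\ge k}S_r(n+r,k+r)\frac{z^n}{n!}=\frac{1}{k!}e^{rz}(e^z-1)^k$. For an integer $p\ge0$, the $p$-Bell numbers $\mathcal{B}_{n,p}$ are defined by $\sum_{n\ge0}\mathcal{B}_{n,p}\frac{z^n}{n!}=\sum_{n\ge0}\binom{n+p}{p}^{-1}\frac{(e^z-1)^n}{n!}$. *)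

(* Defs.v *)
From mathcomp Require Import all_boot all_order all_algebra.
Set Implicit Arguments. Unset Strict Implicit. Unset Printing Implicit Defensive.
Import GRing.Theory Num.Theory.
Local Open Scope ring_scope.

(* Signed Stirling numbers of the first kind, via the defining identity
   x(x-1)...(x-m+1) = sum_k s(m,k) x^k, i.e. s(m,k) is the k-th coefficient
   of the falling-factorial polynomial. *)
Definition falling_poly (m : nat) : {poly int} :=
  \prod_(i < m) ('X - (i%:Z)%:P).
Definition stirling1 (m k : nat) : int := (falling_poly m)`_k.

(* r-Stirling numbers of the second kind: number of partitions of an n-set
   (here 'I_n) into k nonempty blocks such that the first r elements
   (0, ..., r-1) lie in distinct blocks. *)
Definition rstirling2 (r n k : nat) : nat :=
  #|[set P : {set {set 'I_n}} |
      [&& partition P [set: 'I_n], #|P| == k &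
          [forall i : 'I_n, forall j : 'I_n,
             ((i < r)%N && (j < r)%N && (i != j)) ==> (pblock P i != pblock P j)]]]|.

(* p-Bell numbers: n! times the coefficient of z^n in
   sum_j binom(j+p,p)^{-1} (e^z-1)^j/j!.  Since (e^z-1)^j/j! has
   n!-normalised coefficients S_0(n,j) (the r = 0 case of the EGF of the
   r-Stirling numbers), this is the finite sum below (S_0(n,j)=0 for j>n). *)
Definition pbell (n p : nat) : rat :=
  \sum_(j < n.+1) (rstirling2 0 n j)%:R / ('C(j + p, p))%:R.

(* Main.v *)
Require Import Defs.
From mathcomp Require Import all_boot all_order all_algebra.
From mathcomp Require Import ring.
Import GRing.Theory Num.Theory.
Set Implicit Arguments. Unset Strict Implicit. Unset Printing Implicit Defensive.

Section Gen.
Variable T : finType.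
Implicit Types (D R : {set T}) (P Q : {set {set T}}).

Definition good D R k P := [&& partition P D, #|P| == k &
  [forall i in R, forall j in R, (i != j) ==> (pblock P i != pblock P j)]].
Definition fcount D R k := #|[set P | good D R k P]|.

Lemma distP P R : reflect {in R &, forall i j, i != j -> pblock P i != pblock P j}
  [forall i in R, forall j in R, (i != j) ==> (pblock P i != pblock P j)].
Proof.
apply: (iffP forallP) => H.
  move=> i j iR jR ij; move: (H i); rewrite iR /= => /forallP/(_ j).
  by rewrite jR ij.
move=> i; apply/implyP=> iR; apply/forallP=> j; apply/implyP=> jR; apply/implyP.
exact: H.
Qed.

Lemma pp_pblock (rT : eqType) (f : T -> rT) D a b : a \in D -> b \in D ->
  (pblock (preim_partition f D) a == pblock (preim_partition f D) b) = (f a == f b).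
Proof.
move=> aD bD; have /and3P[/eqP cov ti _] := preim_partitionP f D.
rewrite eq_pblock // ?cov // pblock_equivalence_partition //.
by move=> ? ? ? _ _ _; split=> // /eqP->.
Qed.

Lemma pp_eq (rT rT' : eqType) (f : T -> rT) (g : T -> rT') D :
  {in D &, forall a b, (f a == f b) = (g a == g b)} ->
  preim_partition f D = preim_partition g D.
Proof.
move=> H; rewrite /preim_partition /equivalence_partition.
apply: eq_in_imset => a aD; apply/setP => b; rewrite !inE.
by case bD: (b \in D) => //=; apply: H.
Qed.

Lemma pp_card (rT : finType) (f : T -> rT) D :
  #|preim_partition f D| = #|f @: D|.
Proof.
have -> : preim_partition f D = (fun v => [set b in D | v == f b]) @: (f @: D).
  by rewrite -imset_comp.
apply: card_in_imset => _ _ /imsetP[a aD ->] /imsetP[b bD ->] E.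
have : a \in [set c in D | f a == f c] by rewrite inE aD eqxx.
by rewrite E inE => /andP[_ /eqP].
Qed.

Lemma part_pp P D : partition P D -> P = preim_partition (pblock P) D.
Proof. by move=> H; rewrite preim_partition_pblock. Qed.

Lemma part_card P D : partition P D -> #|P| = #|pblock P @: D|.
Proof. by move=> H; rewrite {1}(part_pp H) pp_card. Qed.

Lemma pblock_eqE P D a b : partition P D -> a \in D ->
  (pblock P a == pblock P b) = (b \in pblock P a).
Proof.
by case/and3P=> /eqP cov ti _ aD; rewrite eq_pblock // cov.
Qed.

Lemma card_nat_set (I : finType) (c : pred I) : #|[set i | c i]| = (\sum_i (c i : nat))%N.
Proof.
rewrite -sum1_card big_mkcond /=; apply: eq_bigr => i _; rewrite inE.
by case: (c i).
Qed.

Section Rec.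
Variables (D R : {set T}) (x : T) (k : nat).
Hypotheses (RD : R \subset D) (xD : x \in D) (xR : x \notin R).
Let D' := D :\ x.
Let sig y a := if a == x then y else a.

Lemma RD' : R \subset D'.
Proof.
apply/subsetP=> a aR; rewrite !inE (subsetP RD) // andbT.
by apply: contraNneq xR => <-.
Qed.

Lemma sig_im y : y \in D' -> sig y @: D = D'.
Proof.
move=> yD; apply/setP=> a; apply/imsetP/idP => [[b bD ->]|aD].
  rewrite /sig; case: eqP => // /eqP bx; by rewrite !inE bx bD.
exists a; first by move: aD; rewrite !inE => /andP[].
by move: aD; rewrite /sig !inE => /andP[/negbTE -> _].
Qed.

Lemma Ay_count y : y \in R ->
  #|[set P | good D R k P && (y \in pblock P x)]| = fcount D' R k.
Proof.
move=> yR; have yD' : y \in D' := subsetP RD' y yR.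
have yD : y \in D by move: yD'; rewrite inE => /andP[].
have yx : y != x by move: yD'; rewrite !inE => /andP[].
pose phi P := preim_partition (pblock P) D'.
pose psi Q := preim_partition (fun a => pblock Q (sig y a)) D.
have sigD a : a \in D -> sig y a \in D'.
  by move=> aD; rewrite -(sig_im yD'); apply: imset_f.
have sigid a : a \in D' -> sig y a = a.
  by rewrite /sig !inE => /andP[/negbTE -> _].
have D'D a : a \in D' -> a \in D by rewrite inE => /andP[].
have Hphi P : good D R k P && (y \in pblock P x) ->
    good D' R k (phi P) /\ psi (phi P) = P.
  case/andP=> /and3P[pP /eqP cP /distP dP] yx'.
  have eyx : pblock P y = pblock P x by apply: same_pblock => //; case/and3P: pP.
  have psig a : pblock P (sig y a) = pblock P a.
    by rewrite /sig; case: eqP => [->|].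
  split.
    apply/and3P; split; first exact: preim_partitionP.
      have E : pblock P @: D' = pblock P @: D.
        rewrite -(sig_im yD') -imset_comp; apply: eq_in_imset => a _; exact: psig.
      by rewrite pp_card E -(part_card pP) cP.
    apply/(distP (phi P) R) => i j iR jR ij.
    rewrite pp_pblock ?(subsetP RD') //; exact: dP.
  rewrite {2}(part_pp pP); apply: pp_eq => a b aD bD.
  by rewrite pp_pblock ?sigD // !psig.
have Hpsi Q : good D' R k Q ->
    (good D R k (psi Q) && (y \in pblock (psi Q) x)) /\ phi (psi Q) = Q.
  case/and3P=> qP /eqP cQ /distP dQ.
  have ppsi : partition (psi Q) D by apply: preim_partitionP.
  split.
    apply/andP; split; last first.
      by rewrite -(pblock_eqE _ ppsi xD) pp_pblock // /sig eqxx (negbTE yx).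
    apply/and3P; split=> //.
      have E : (fun a => pblock Q (sig y a)) @: D = pblock Q @: D'.
        by rewrite -(sig_im yD') -imset_comp.
      by rewrite pp_card E -(part_card qP) cQ.
    apply/(distP (psi Q) R) => i j iR jR ij.
    have iD' := subsetP RD' i iR; have jD' := subsetP RD' j jR.
    by rewrite pp_pblock ?D'D // !sigid //; exact: dQ.
  rewrite {2}(part_pp qP); apply: pp_eq => a b aD bD.
  by rewrite pp_pblock ?D'D // !sigid.
rewrite /fcount.
have -> : [set P | good D' R k P] = phi @: [set P | good D R k P && (y \in pblock P x)].
  apply/setP=> Q; rewrite inE; apply/idP/imsetP => [gQ|[P]].
    have [g1 e1] := Hpsi Q gQ; exists (psi Q); by rewrite ?inE ?e1.
  by rewrite inE => /Hphi[g1 e1] ->.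
apply/esym/card_in_imset => P1 P2; rewrite !inE => /Hphi[_ e1] /Hphi[_ e2] E.
by rewrite -e1 -e2 E.
Qed.


Lemma point_rec P : (good D R k P : nat) =
  (good D (x |: R) k P + \sum_(y in R) (good D R k P && (y \in pblock P x) : nat))%N.
Proof.
case gP: (good D R k P); last first.
  rewrite big1 ?addn0; last by move=> y _.
  case gP': (good D (x |: R) k P) => //.
  move: gP'; case/and3P=> pP cP /distP dP.
  move: gP; rewrite /good pP cP /= => /negbT/negP; case.
  apply/distP => i j iR jR; apply: dP; by rewrite !inE ?iR ?jR orbT.
move: (gP); case/and3P => pP /eqP cP /distP dP.
set S := [set y in R | y \in pblock P x].
have cS : (\sum_(y in R) ((true && (y \in pblock P x)) : nat))%N = #|S|.
  rewrite /S card_nat_set big_mkcond /=; apply: eq_bigr => y _.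
  by case: (y \in R).
rewrite cS; have tP := partition_trivIset pP.
case: (set_0Vmem S) => [S0 | [y0 y0S]].
  rewrite S0 cards0 addn0.
  suff -> : good D (x |: R) k P by [].
  rewrite /good pP cP eqxx /=; apply/distP => i j; rewrite !inE.
  have hx j' : j' \in R -> pblock P x != pblock P j'.
    move=> jR; rewrite (pblock_eqE _ pP xD); apply/negP => jx.
    have : j' \in S by rewrite inE jR jx.
    by rewrite S0 inE.
  case/predU1P=> [->|iR]; case/predU1P=> [->|jR] //; rewrite ?eqxx //.
  - by move=> _; apply: hx.
  - by move=> _; rewrite eq_sym; apply: hx.
  - by apply: dP.
move: (y0S); rewrite inE => /andP[y0R y0x].
have -> : good D (x |: R) k P = false.
  apply/negP => /and3P[_ _ /distP H].
  have xy0 : x != y0 by apply: contraNneq xR => ->.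
  have := H x y0; rewrite !inE eqxx y0R orbT => /(_ isT isT xy0).
  by rewrite (pblock_eqE _ pP xD) y0x.
have -> : S = [set y0].
  apply/setP => y; rewrite inE; apply/idP/eqP => [|->//].
  rewrite inE => /andP[yR yx].
  have E : pblock P y = pblock P y0.
    by rewrite (same_pblock tP yx) (same_pblock tP y0x).
  case: (eqVneq y y0) => // ne.
  by have := dP y y0 yR y0R ne; rewrite E eqxx.
by rewrite cards1.
Qed.

Lemma fcount_rec : fcount D R k = (fcount D (x |: R) k + #|R| * fcount D' R k)%N.
Proof.
rewrite /fcount !card_nat_set.
rewrite (eq_bigr _ (fun P _ => point_rec P)) big_split /=; congr (_ + _)%N.
rewrite exchange_big /= -sum_nat_const; apply: eq_bigr => y yR.
by rewrite -!card_nat_set; exact: Ay_count.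
Qed.
End Rec.

Lemma good_le D R k P : good D R k P -> (k <= #|D|)%N.
Proof.
case/and3P=> pP /eqP <- _; rewrite (card_partition pP) -sum1_card.
apply: leq_sum => B BP; rewrite card_gt0; exact: partition_neq0 pP BP.
Qed.

Lemma good_ge D R k P : R \subset D -> good D R k P -> (#|R| <= k)%N.
Proof.
move=> RD /and3P[pP /eqP <- /distP dP].
have <- : #|pblock P @: R| = #|R|.
  apply: card_in_imset => i j iR jR E; apply/eqP; apply: contraT => ne.
  by have := dP i j iR jR ne; rewrite E eqxx.
apply: subset_leq_card; apply/subsetP => _ /imsetP[i iR ->].
apply: pblock_mem; rewrite (cover_partition pP); exact: subsetP RD i iR.
Qed.

Lemma fcount_big D R k : (#|D| < k)%N -> fcount D R k = 0%N.
Proof.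
move=> lt; apply/eqP; rewrite cards_eq0; apply/eqP/setP => P; rewrite !inE.
apply/negP => /good_le; by rewrite leqNgt lt.
Qed.

Lemma fcount_small D R k : R \subset D -> (k < #|R|)%N -> fcount D R k = 0%N.
Proof.
move=> RD lt; apply/eqP; rewrite cards_eq0; apply/eqP/setP => P; rewrite !inE.
apply/negP => /(good_ge RD); by rewrite leqNgt lt.
Qed.
End Gen.

Section Transport.
Variables (T T' : finType) (h : T -> T') (hinj : injective h).
Let phiT (P : {set {set T}}) := [set h @: (B : {set T}) | B in P].

Lemma pblock_imset P (D : {set T}) a : partition P D -> a \in D ->
  pblock (phiT P) (h a) = h @: pblock P a.
Proof.
move=> pP aD; have ti : trivIset (phiT P).
  by rewrite /phiT imset_trivIset //; exact: partition_trivIset pP.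
apply: def_pblock => //.
  by apply: imset_f; apply: pblock_mem; rewrite (cover_partition pP).
by apply: imset_f; rewrite mem_pblock (cover_partition pP).
Qed.

Lemma good_imset (D R : {set T}) k P : R \subset D ->
  good (h @: D) (h @: R) k (phiT P) = good D R k P.
Proof.
move=> RD; rewrite /good /phiT imset_partition //.
case pP: (partition P D) => //=.
rewrite card_imset; last exact: imset_inj.
congr (_ && _); apply/distP/distP => H.
  move=> i j iR jR ij; have := H (h i) (h j) (imset_f _ iR) (imset_f _ jR).
  rewrite (inj_eq hinj) => /(_ ij).
  rewrite !(pblock_imset pP) ?(subsetP RD) //.
  by rewrite (inj_eq (imset_inj hinj)).
move=> _ _ /imsetP[i iR ->] /imsetP[j jR ->]; rewrite (inj_eq hinj) => ij.
rewrite !(pblock_imset pP) ?(subsetP RD) //.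
by rewrite (inj_eq (imset_inj hinj)); apply: H.
Qed.

Lemma fcount_imset (D R : {set T}) k : R \subset D ->
  fcount (h @: D) (h @: R) k = fcount D R k.
Proof.
move=> RD; rewrite /fcount.
have -> : [set P' | good (h @: D) (h @: R) k P'] = phiT @: [set P | good D R k P].
  apply/setP => P'; rewrite inE; apply/idP/imsetP => [gP'|[P]]; last first.
    by rewrite inE => gP ->; rewrite good_imset.
  have pP' : partition P' (h @: D) by case/and3P: gP'.
  exists [set h @^-1: (B : {set T'}) | B in P']; last first.
    rewrite /phiT -imset_comp -[LHS]imset_id; apply: eq_in_imset => B BP /=.
    have BD := partitionS pP' BP.
    apply/setP => b; apply/idP/imsetP => [bB|[a aB ->]].
      have /imsetP[a _ ea] := subsetP BD b bB.
      by exists a; rewrite // inE -ea.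
    by move: aB; rewrite inE.
  rewrite inE -(good_imset _ _ RD).
  suff -> : phiT [set h @^-1: (B : {set T'}) | B in P'] = P' by [].
  rewrite /phiT -imset_comp -[RHS]imset_id; apply: eq_in_imset => B BP /=.
  have BD := partitionS pP' BP.
  apply/setP => b; apply/imsetP/idP => [[a aB ->]|bB].
    by move: aB; rewrite inE.
  have /imsetP[a _ ea] := subsetP BD b bB.
  by exists a; rewrite // inE -ea.
apply: card_imset; apply: imset_inj; exact: imset_inj.
Qed.
End Transport.

Definition first n m : {set 'I_n} := [set i : 'I_n | (i < m)%N].

Lemma rstirlingE r n k : rstirling2 r n k = fcount [set: 'I_n] (first n r) k.
Proof.
rewrite /rstirling2 /fcount; apply: eq_card => P; rewrite !inE /good.
congr (_ && (_ && _)); apply/idP/distP => H.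
  move=> i j; rewrite !inE => ir jr ij; move/forallP: H => /(_ i)/forallP/(_ j).
  by rewrite ir jr ij.
apply/forallP => i; apply/forallP => j; apply/implyP => /andP[/andP[ir jr] ij].
by apply: H; rewrite ?inE.
Qed.

Lemma card_first n m : (m <= n)%N -> #|first n m| = m.
Proof.
move=> mn; have -> : first n m = (fun i : 'I_m => widen_ord mn i) @: [set: 'I_m].
  apply/setP => i; rewrite inE; apply/idP/imsetP => [im | [j _ ->]].
    by exists (Ordinal im) => //; apply: val_inj.
  by rewrite /= ltn_ord.
rewrite card_imset ?cardsT ?card_ord // => a b /(congr1 val) /= E.
exact: val_inj.
Qed.

Lemma rs_rec m N j : (m <= N)%N ->
  rstirling2 m N.+1 j = (rstirling2 m.+1 N.+1 j + m * rstirling2 m N j)%N.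
Proof.
move=> mN; rewrite !rstirlingE.
have xm : (m < N.+1)%N by rewrite ltnS.
pose x : 'I_N.+1 := Ordinal xm.
have xnot : x \notin first N.+1 m by rewrite inE ltnn.
have H := fcount_rec j (subsetT (first N.+1 m)) (in_setT x) xnot.
have e0 : x |: first N.+1 m = first N.+1 m.+1.
  by apply/setP => i; rewrite !inE -val_eqE /= [in RHS]ltnS [in RHS]leq_eqVlt.
have e1 : [set: 'I_N.+1] :\ x = lift x @: [set: 'I_N].
  apply/setP => a; rewrite !inE andbT; apply/idP/imsetP => [ax | [i _ ->]].
    case: (unliftP x a) => [i ->|E]; first by exists i.
    by rewrite E eqxx in ax.
  by rewrite eq_sym neq_lift.
have e2 : first N.+1 m = lift x @: first N m.
  apply/setP => a; rewrite inE; apply/idP/imsetP => [am | [i im ->]].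
    have ax : a != x by rewrite -val_eqE /= neq_ltn am.
    case: (unliftP x a) => [i ea|E]; last by rewrite E eqxx in ax.
    exists i => //; rewrite inE; move: am; rewrite ea /= /bump /=.
    by move=> H2; apply: leq_ltn_trans (leq_addl _ _) H2.
  by move: im; rewrite !inE /= /bump /= => im; rewrite (leqNgt m i) im add0n.
have e3 : fcount ([set: 'I_N.+1] :\ x) (first N.+1 m) j = fcount [set: 'I_N] (first N m) j.
  by rewrite e1 e2 fcount_imset ?subsetT //; exact: lift_inj.
by rewrite e0 e3 card_first ?(leq_trans mN) // in H.
Qed.

Local Open Scope ring_scope.

Lemma fp_rec m : falling_poly m.+1 = falling_poly m * ('X - (m%:Z)%:P).
Proof. by rewrite /falling_poly big_ord_recr. Qed.

Lemma s_rec0 m : stirling1 m.+1 0 = - (m%:Z) * stirling1 m 0.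
Proof.
rewrite /stirling1 fp_rec mulrBr coefB coefMX coefMC /=.
by rewrite sub0r mulrC mulNr.
Qed.

Lemma s_recS m k : stirling1 m.+1 k.+1 = stirling1 m k - m%:Z * stirling1 m k.+1.
Proof.
by rewrite /stirling1 fp_rec mulrBr coefB coefMX coefMC /= mulrC.
Qed.

Lemma s00 : stirling1 0 0 = 1.
Proof. by rewrite /stirling1 /falling_poly big_ord0 coef1. Qed.

Lemma s_big m k : (m < k)%N -> stirling1 m k = 0.
Proof.
elim: m k => [|m IH] [|k] //.
  by move=> _; rewrite /stirling1 /falling_poly big_ord0 coef1.
by rewrite ltnS => mk; rewrite s_recS !IH ?mulr0 ?subr0 // ltnW.
Qed.

Lemma key m : forall n j, ((rstirling2 m (n + m) j)%:Z =
  \sum_(k < m.+1) stirling1 m k * (rstirling2 0 (n + k) j)%:Z).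
Proof.
elim: m => [|m IH] n j.
  by rewrite big_ord1 s00 mul1r addn0.
have R := rs_rec j (leq_addl n m).
have E : (rstirling2 m (n+m).+1 j)%:Z
   = (rstirling2 m.+1 (n+m).+1 j)%:Z + m%:Z * (rstirling2 m (n+m) j)%:Z.
  by rewrite R PoszD PoszM.
rewrite addnS; apply: (addIr (m%:Z * (rstirling2 m (n+m) j)%:Z)); rewrite -E.
rewrite -addSn IH IH.
set F := fun k => (rstirling2 0 (n + k) j)%:Z.
have h3 : \sum_(k < m.+1) stirling1 m k * (rstirling2 0 (n.+1 + k) j)%:Z
    = \sum_(i < m.+1) stirling1 m i * F i.+1.
  by apply: eq_bigr => i _; rewrite /F addSn addnS.
have h2 : \sum_(k < m.+1) stirling1 m k * (rstirling2 0 (n + k) j)%:Z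
    = stirling1 m 0 * F 0%N + \sum_(i < m) stirling1 m i.+1 * F i.+1.
  by rewrite big_ord_recl.
have h1 : \sum_(k < m.+2) stirling1 m.+1 k * (rstirling2 0 (n + k) j)%:Z
    = - (m%:Z) * stirling1 m 0 * F 0%N + \sum_(i < m.+1) stirling1 m i * F i.+1
      - m%:Z * \sum_(i < m) stirling1 m i.+1 * F i.+1.
  rewrite big_ord_recl s_rec0 -addrA; congr (_ + _).
  rewrite (eq_bigr (fun i : 'I_m.+1 => stirling1 m i * F i.+1
       - m%:Z * (stirling1 m i.+1 * F i.+1))); last first.
    by move=> i _; rewrite s_recS /F mulrBl mulrA.
  rewrite big_split /= sumrN -mulr_sumr; congr (_ - _); congr (_ * _).
  by rewrite big_ord_recr /= s_big // mul0r addr0.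
rewrite h3 h2 h1; ring.
Qed.

Lemma rs0_big N j : (N < j)%N -> rstirling2 0 N j = 0%N.
Proof. by move=> lt; rewrite rstirlingE fcount_big // cardsT card_ord. Qed.

Lemma pbell_ext N p M : (N < M)%N -> pbell N p =
  \sum_(j < M) (rstirling2 0 N j)%:R / ('C(j + p, p))%:R.
Proof.
move=> NM; rewrite /pbell (big_ord_widen M (fun j => (rstirling2 0 N j)%:R / ('C(j + p, p))%:R : rat)) //.
rewrite big_mkcond /=; apply: eq_bigr => j _; case: ltnP => // H.
by rewrite rs0_big // mul0r.
Qed.

Theorem mainTheorem2 (m n p : nat) :
  \sum_(k < m.+1) ((stirling1 m k)%:~R * pbell (n + k) p : rat)
  = \sum_(k < n.+1) (rstirling2 m (n + m) (k + m))%:R / ('C(m + k + p, p))%:R.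
Proof.
rewrite (eq_bigr (fun k : 'I_m.+1 => \sum_(j < m + n.+1)
   (stirling1 m k)%:~R * ((rstirling2 0 (n + k) j)%:R / ('C(j + p, p))%:R) : rat)); last first.
  move=> k _; rewrite (pbell_ext p (M := m + n.+1)) ?mulr_sumr //.
  by rewrite addnS ltnS addnC leq_add2r -ltnS ltn_ord.
rewrite exchange_big /=.
rewrite (eq_bigr (fun j : 'I_(m + n.+1) =>
   (rstirling2 m (n + m) j)%:R / ('C(j + p, p))%:R : rat)); last first.
  move=> j _; rewrite (eq_bigr (fun k : 'I_m.+1 =>
      ((stirling1 m k * (rstirling2 0 (n + k) j)%:Z)%:~R) / ('C(j + p, p))%:R : rat)); last first.
    by move=> k _; rewrite intrM mulrA.
  rewrite -mulr_suml -rmorph_sum -key //.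
rewrite big_split_ord /= big1 ?add0r; last first.
  move=> i _; rewrite rstirlingE fcount_small ?mul0r ?subsetT //.
  by rewrite card_first ?leq_addl.
by apply: eq_bigr => i _; rewrite /= (addnC m i).
Qed.
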